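(* Let $A=(Q,\Sigma,T,q_0,Q_a,Q_r,\delta)$ be a simplified QPA-structure with reduced transition function $\varphi$. Then its evolution operator $U_A$ is unitary if and only if all the following hold: (1) for all $(q_1,\sigma_1,\tau_1)\in Q\times\Gamma\times\Delta$: $\sum_{(q,\omega)\in Q\times\Delta^*}|\varphi(q_1,\sigma_1,\tau_1,q,\omega)|^2=1$; (2) for all triples $(q_1,\sigma_1,\tau_1)\ne(q_2,\sigma_1,\tau_2)$ in $Q\times\Gamma\times\Delta$: $\sum_{(q,\omega)\in Q\times\Delta^*}\varphi^*(q_1,\sigma_1,\tau_1,q,\omega)\varphi(q_2,\sigma_1,\tau_2,q,\omega)=0$; (3) for all $(q_1,\sigma_1,\tau_1,\tau_2)\in Q\times\Gamma\times\Delta^2$: $\sum_{(q,\tau,\omega)\in Q\times\Delta\times\{\varepsilon,\tau_2,\tau_1\tau_2\}}|\varphi(q,\sigma_1,\tau,q_1,\omega)|^2=1$; (4) for all $(q_1,\sigma_1,\tau_1),(q_2,\sigma_1,\tau_2)\in Q\times\Gamma\times\Delta$ and all $\tau_3\in\Delta$: (a) $\sum_{(q,\tau)\in Q\times\Delta}\varphi^*(q_1,\sigma_1,\tau_1,q,\tau)\varphi(q_2,\sigma_1,\tau_2,q,\tau_3\tau)+\sum_{q\in Q}\varphi^*(q_1,\sigma_1,\tau_1,q,\varepsilon)\varphi(q_2,\sigma_1,\tau_2,q,\tau_3)=0$ and (b) $\sum_{q\in Q}\varphi^*(q_1,\sigma_1,\tau_1,q,\varepsilon)\varphi(q_2,\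sigma_1,\tau_2,q,\tau_2\tau_3)=0$.
   Context: $z^*$ is complex conjugate, $\varepsilon$ the empty word; an operator $U$ is unitary if $UU^*=U^*U=I$. A QPA-structure is a tuple $A=(Q,\Sigma,T,q_0,Q_a,Q_r,\delta)$ with $Q$ a finite set of states, $\Sigma$ a finite input alphabet, $T$ a finite stack alphabet, $q_0\in Q$, $Q_a,Q_r\subset Q$ disjoint, $\Gamma=\Sigma\cup\{\#,\$\}$ (end-markers not in $\Sigma$), $\Delta=T\cup\{Z_0\}$ ($Z_0\notin T$), and $\delta:Q\times\Gamma\times\Delta\times Q\times\{\downarrow,\to\}\times\Delta^*\to\mathbb{C}$ with values of modulus at most $1$, such that whenever $\delta(q,\alpha,\beta,q',d,\omega)\ne0$: $|\omega|\le2$; if $|\omega|=2$ then $\omega_1=\beta$; if $\beta=Z_0$ then $\omega\in Z_0T^*$; if $\beta\ne Z_0$ then $\omega\in T^*$. A configuration is $|\nu_i q_j\nu_k,\omega_l\rangle$ with $q_j\in Q$, $\nu_i\nu_k\in\#\Sigma^*\$$, input head on the first symbol of $\nu_k$, $\omega_l\in Z_0T^*$ the stack with head on its last symbol; $C$ is the set of configurations, $H_A=\ell_2(C)$. The evolution operator is defined on basis vectors: for $c=|\nu_i q_j\sigma\nu_k,\omega_l\tau\rangle$, $U_A|c\rangle=\sum_{(q,d,\omega)}\delta(q_j,\sigma,\tau,q,d,\omega)|f(c,d,q),\omega_l\omega\rangle$, where $f(c,\downarrow,q)=\nu_i q\sigma\nu_k$, $f(c,\to,q)=\nu_i\sigma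 q\nu_k$. The QPA-structure is simplified if there is a function $D:Q\to\{\downarrow,\to\}$ such that $\delta(q_1,\sigma,\tau,q,d,\omega)=0$ whenever $D(q)\ne d$; its reduced transition function is $\varphi(q_1,\sigma,\tau,q,\omega)=\delta(q_1,\sigma,\tau,q,D(q),\omega)$. *)

(* Defs.v *)
From HB Require Import structures.
From mathcomp Require Import all_boot all_order all_algebra.
Set Implicit Arguments. Unset Strict Implicit. Unset Printing Implicit Defensive.
Import Order.TTheory GRing.Theory Num.Theory.
Local Open Scope ring_scope.

(* Gamma = Sigma ∪ {#,$} : inl s = s, inr false = '#', inr true = '$'. *)
Definition Gam (Sigma : finType) : finType := (Sigma + bool)%type.
Definition lend (Sigma : finType) : Gam Sigma := inr false.
Definition rend (Sigma : finType) : Gam Sigma := inr true.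

(* Delta = T ∪ {Z0} : None = Z0, Some t = t. *)
Definition Delta (T : finType) : finType := option T.

(* Directions: false = "stay" (↓), true = "move right" (→). *)

Section QPA.
Variables (C : numClosedFieldType) (Q Sigma T : finType).

Definition transfun :=
  Q -> Gam Sigma -> Delta T -> Q -> bool -> seq (Delta T) -> C.

Definition QPA_transfun (delta : transfun) : Prop :=
  (forall q1 a b q d om, `|delta q1 a b q d om| <= 1) /\
  (forall q1 a b q d om, delta q1 a b q d om != 0 ->
     [/\ (size om <= 2)%N,
         size om = 2%N -> nth None om 0 = b,
         b = None -> exists s : seq T, om = None :: map Some s
       & b <> None -> exists s : seq T, om = map Some s]).

Definition simplified (delta : transfun) (D : Q -> bool) : Prop :=
  forall q1 a b q d om, D q != d -> delta q1 a b q d om = 0.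

Definition reduced (delta : transfun) (D : Q -> bool)
  (q1 : Q) (a : Gam Sigma) (b : Delta T) (q : Q) (om : seq (Delta T)) : C :=
  delta q1 a b q (D q) om.

(* All words over Delta of length <= 2 (each exactly once).  Under
   QPA_transfun every transition amplitude vanishes outside these words, so
   sums over Delta^* reduce to sums over this list. *)
Definition words_le2 : seq (seq (Delta T)) :=
  [:: [::]] ++ [seq [:: a] | a <- enum (Delta T)]
            ++ [seq [:: a; b] | a <- enum (Delta T), b <- enum (Delta T)].

(* Configurations: (w, p, q, st) where the tape is # w $, the head is on
   position p (0 = '#', size w + 1 = '$'), q is the state and st the whole
   stack (bottom first, top = last symbol). *)
Definition config : Type := (seq Sigma * nat * Q * seq (Delta T))%type.

Definition valid_config (c : config) : Prop :=
  let '(w, p, q, st) := c in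
  (p < size w + 2)%N /\ exists s : seq T, st = None :: map Some s.

Definition tape (w : seq Sigma) : seq (Gam Sigma) :=
  lend Sigma :: map inl w ++ [:: rend Sigma].

(* Head move; moving right from '$' wraps around to '#' (circular tape). *)
Definition move (w : seq Sigma) (d : bool) (p : nat) : nat :=
  if d then (p.+1 %% (size w + 2))%N else p.

(* U_A |c> as a finite formal sum of (amplitude, configuration) pairs. *)
Definition Ucol (delta : transfun) (c : config) : seq (C * config) :=
  let '(w, p, qj, st) := c in
  flatten [seq flatten [seq [seq (delta qj (nth (lend Sigma) (tape w) p)
                                        (last None st) q d om,
                                  (w, move w d p, q,
                                   take (size st).-1 st ++ om))
                              | om <- words_le2]
                        | d <- [:: false; true]]
          | q <- enum Q].

(* Matrix entry <c'| U_A |c>. *)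
Definition Uent (delta : transfun) (c' c : config) : C :=
  \sum_(x <- Ucol delta c) x.1 * (x.2 == c')%:R.

Definition fin_sum (f : config -> C) (s : C) : Prop :=
  exists L : seq config,
    [/\ uniq L, forall c, c \in L -> valid_config c,
        forall c, valid_config c -> f c != 0 -> c \in L
      & s = \sum_(c <- L) f c].

(* U_A unitary on l2(C): U^* U = I and U U^* = I, tested on basis vectors. *)
Definition unitary_U (delta : transfun) : Prop :=
  (forall c1 c2, valid_config c1 -> valid_config c2 ->
     fin_sum (fun c => (Uent delta c c1)^* * Uent delta c c2) (c1 == c2)%:R) /\
  (forall c1 c2, valid_config c1 -> valid_config c2 ->
     fin_sum (fun c => Uent delta c1 c * (Uent delta c2 c)^*) (c1 == c2)%:R).

End QPA.

(* Main.v *)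
Require Import Defs.
From HB Require Import structures.
From mathcomp Require Import all_boot all_order all_algebra.
From mathcomp Require Import ring.
Import Order.TTheory GRing.Theory Num.Theory.
Local Open Scope ring_scope.
Set Implicit Arguments. Unset Strict Implicit. Unset Printing Implicit Defensive.

Section Generic.
Variables (C : numClosedFieldType) (Q Sigma T : finType).
Local Notation config := (config Q Sigma T).
Local Notation valid := (@valid_config Q Sigma T).

Lemma sum_pred1 (X : eqType) (l : seq X) (F : X -> C) y :
  uniq l -> \sum_(x <- l) F x * (x == y)%:R = (y \in l)%:R * F y.
Proof.
move=> ul; case: (boolP (y \in l)) => yl.
  rewrite (bigD1_seq y) //= eqxx mulr1 mul1r big1 ?addr0 // => x /negbTE ->.
  by rewrite mulr0.
rewrite mul0r big_seq big1 // => x xl.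
by case: eqP xl yl => [->->|] //; rewrite mulr0.
Qed.

Definition supp_list (f : config -> C) (L : seq config) :=
  [/\ uniq L, forall c, c \in L -> f c != 0 -> valid c &
      forall c, valid c -> f c != 0 -> c \in L].

Lemma supp_swap f L1 L2 : supp_list f L1 -> supp_list f L2 ->
  \sum_(c <- L1) f c = \sum_(c <- L2) f c.
Proof.
move=> [u1 v1 s1] [u2 v2 s2].
have -> : \sum_(c <- L1) f c = \sum_(c <- L1 | c \in L2) f c.
  rewrite [RHS]big_mkcond [LHS]big_seq [RHS]big_seq; apply: eq_bigr => c cL1; case: ifP => // nL2.
  have [//|nz] := eqVneq (f c) 0.
  have := s2 c (v1 c cL1 nz) nz. by rewrite nL2.
have -> : \sum_(c <- L2) f c = \sum_(c <- L2 | c \in L1) f c.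
  rewrite [RHS]big_mkcond [LHS]big_seq [RHS]big_seq; apply: eq_bigr => c cL2; case: ifP => // nL1.
  have [//|nz] := eqVneq (f c) 0.
  have := s1 c (v2 c cL2 nz) nz. by rewrite nL1.
rewrite -[LHS]big_filter -[RHS]big_filter; apply: perm_big; apply: uniq_perm; rewrite ?filter_uniq //.
by move=> c; rewrite !mem_filter andbC.
Qed.

Lemma fin_sum_supp f s L : supp_list f L ->
  fin_sum f s <-> s = \sum_(c <- L) f c.
Proof.
move=> sL; split.
  case=> L' [u' v' s' ->]; apply: supp_swap => //; split => // c cL _; exact: v'.
move=> ->; case: sL => [u v sp].
exists [seq c <- L | f c != 0]; split.
- exact: filter_uniq.
- by move=> c; rewrite mem_filter => /andP [nz cL]; apply: v.
- by move=> c vc nz; rewrite mem_filter nz sp.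
rewrite big_filter [RHS]big_mkcond; apply: eq_bigr => c _.
by case: eqVneq.
Qed.

Lemma cover_cols (U : config -> config -> C) :
  (forall c1 c2, valid c1 -> valid c2 ->
     fin_sum (fun c => (U c c1)^* * U c c2) (c1 == c2)%:R) ->
  forall l : seq config, (forall a, a \in l -> valid a) ->
  exists S, [/\ uniq S, forall c, c \in S -> valid c &
     forall a, a \in l -> forall c, valid c -> U c a != 0 -> c \in S].
Proof.
move=> H1; elim=> [|a l IH] vl.
  by exists [::]; split.
have [|S [uS vS sS]] := IH; first by move=> b bl; apply: vl; rewrite inE bl orbT.
have va : valid a by apply: vl; rewrite inE eqxx.
case: (H1 a a va va) => La [uL vL sL _].
exists (undup (La ++ S)); split.
- exact: undup_uniq.
- by move=> c; rewrite mem_undup mem_cat => /orP [/vL|/vS].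
move=> b; rewrite inE => /orP [/eqP-> | bl] c vc nz; rewrite mem_undup mem_cat.
  by rewrite sL // mulf_neq0 // conjC_eq0.
by rewrite (sS b bl c vc nz) orbT.
Qed.

Lemma rows_ortho (U : config -> config -> C) :
  (forall c1 c2, valid c1 -> valid c2 ->
     fin_sum (fun c => (U c c1)^* * U c c2) (c1 == c2)%:R) ->
  (forall c1, valid c1 -> fin_sum (fun c => U c1 c * (U c1 c)^*) 1) ->
  forall c1 c2, valid c1 -> valid c2 ->
     fin_sum (fun c => U c1 c * (U c2 c)^*) (c1 == c2)%:R.
Proof.
move=> H1 H2 c1 c2 v1 v2.
case: (H2 c1 v1) => R [uR vR sR e1].
have sl : supp_list (fun c => U c1 c * (U c2 c)^*) R.
  split => // [c cR _|c vc nz]; first exact: vR.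
  apply: (sR c vc); rewrite /= mul_conjC_eq0.
  by apply: contraNneq nz => ->; rewrite mul0r.
apply/(fin_sum_supp _ sl).
case: (eqVneq c1 c2) => [<-|ne]; first by rewrite e1.
have [S0 [uS0 vS0 sS0]] := cover_cols H1 vR.
pose S := undup (c1 :: c2 :: S0).
have uS : uniq S by apply: undup_uniq.
have vS : forall c, c \in S -> valid c.
  by move=> c; rewrite mem_undup !inE => /orP [/eqP->|/orP [/eqP->|/vS0]].
have sS : forall a, a \in R -> forall c, valid c -> U c a != 0 -> c \in S.
  by move=> a aR c vc nz; rewrite mem_undup !inE (sS0 a aR c vc nz) !orbT.
have c1S : c1 \in S by rewrite mem_undup inE eqxx.
have c2S : c2 \in S by rewrite mem_undup !inE eqxx orbT.
pose g c' := \sum_(a <- R) U c' a * (U c1 a)^*.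
suff g2 : g c2 = 0.
  have -> : \sum_(c <- R) U c1 c * (U c2 c)^* = (g c2)^*.
    rewrite /g rmorph_sum; apply: eq_bigr => a _.
    by rewrite rmorphM /= conjCK mulrC.
  by rewrite g2 conjC0.
have g1 : g c1 = 1 by rewrite /g -e1.
have col : forall a b, a \in R -> b \in R ->
    \sum_(c <- S) (U c b)^* * U c a = (b == a)%:R.
  move=> a b aR bR.
  have slb : supp_list (fun c => (U c b)^* * U c a) S.
    split => // [c cS _|c vc nz]; first exact: vS.
    apply: (sS b bR c vc).
    by apply: contraNneq nz => ->; rewrite conjC0 mul0r.
  by apply/esym; apply: (fin_sum_supp _ slb).1; apply: H1; [apply: vR|apply: vR].
have gg : \sum_(c <- S) g c * (g c)^* = 1.
  transitivity (\sum_(c <- S) \sum_(a <- R) \sum_(b <- R)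
      ((U c1 a)^* * U c1 b) * ((U c b)^* * U c a)).
    apply: eq_bigr => c _; rewrite /g rmorph_sum mulr_suml; apply: eq_bigr => a _.
    rewrite mulr_sumr; apply: eq_bigr => b _; rewrite rmorphM /= conjCK.
    ring.
  rewrite exchange_big /=.
  transitivity (\sum_(a <- R) (U c1 a)^* * U c1 a).
    rewrite big_seq_cond [RHS]big_seq_cond; apply: eq_bigr => a /andP [aR _].
    rewrite exchange_big /=.
    transitivity (\sum_(b <- R) ((U c1 a)^* * U c1 b) * (b == a)%:R).
      rewrite big_seq_cond [RHS]big_seq_cond; apply: eq_bigr => b /andP [bR _].
      by rewrite -mulr_sumr col.
    by rewrite sum_pred1 // aR mul1r.
  by rewrite e1; apply: eq_bigr => a _; rewrite mulrC.
pose d c := (c == c1)%:R : C.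
have dconj : forall c, (d c)^* = d c by move=> c; rewrite /d rmorph_nat.
have tot : \sum_(c <- S) (g c - d c) * (g c - d c)^* = 0.
  transitivity (\sum_(c <- S) (g c * (g c)^*) - \sum_(c <- S) (g c)^* * d c
      - \sum_(c <- S) g c * d c + \sum_(c <- S) d c * d c).
    rewrite -!sumrB -big_split /=; apply: eq_bigr => c _.
    rewrite rmorphB /= dconj; ring.
  rewrite gg !sum_pred1 // c1S !mul1r g1 rmorph1 /d eqxx.
  by rewrite subrr sub0r addrC subrr.
have := tot; move/eqP; rewrite psumr_eq0; last by move=> c _; apply: mul_conjC_ge0.
have ne2 : (c2 == c1) = false by rewrite eq_sym (negbTE ne).
move/allP/(_ c2 c2S) => /=; rewrite mul_conjC_eq0 /d ne2 subr0.
by move/eqP.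
Qed.

End Generic.

Lemma sum_enum (R : nmodType) (I : finType) (F : I -> R) :
  \sum_(i <- enum I) F i = \sum_(i : I) F i.
Proof. by rewrite big_enum. Qed.


Lemma sum_nz (C : numClosedFieldType) (I : eqType) (r : seq I) (F : I -> C) :
  \sum_(i <- r) F i != 0 -> exists i, (i \in r) /\ F i != 0.
Proof.
elim: r => [|a r IH]; first by rewrite big_nil eqxx.
rewrite big_cons; have [Fa|Fa] := eqVneq (F a) 0.
  by rewrite Fa add0r => /IH [i [ir nz]]; exists i; rewrite inE ir orbT.
by move=> _; exists a; rewrite inE eqxx.
Qed.

Lemma mem_pairs (A B : eqType) (s : seq A) (t : seq B) a b :
  ((a, b) \in [seq (x, y) | x <- s, y <- t]) = (a \in s) && (b \in t).
Proof.
apply/allpairsP/andP; first by case=> [[x y] [xs yt [-> ->]]].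
by case=> xa yb; exists (a, b).
Qed.

Section Concrete.
Variables (C : numClosedFieldType) (Q Sigma T : finType).
Variable delta : transfun C Q Sigma T.
Variable D : Q -> bool.
Hypothesis Hqpa : QPA_transfun delta.
Hypothesis Hsimp : simplified delta D.
Local Notation phi := (reduced delta D).
Local Notation U := (Uent delta).
Local Notation config := (config Q Sigma T).
Local Notation words := (words_le2 T).
Local Notation valid := (@valid_config Q Sigma T).

Definition sym (w : seq Sigma) p := nth (lend Sigma) (tape w) p.
Definition tgt (c : config) (q : Q) (om : seq (Delta T)) : config :=
  let '(w, p, _, st) := c in (w, move w (D q) p, q, take (size st).-1 st ++ om).
Definition amp (c : config) q om : C :=
  let '(w, p, qj, st) := c in phi qj (sym w p) (last None st) q om.

Lemma U_tgt c' c : U c' c =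
  \sum_(q <- enum Q) \sum_(om <- words) amp c q om * (tgt c q om == c')%:R.
Proof.
case: c => [[[w p] qj] st].
rewrite /Uent /Ucol; cbv iota beta; rewrite big_flatten (big_map _ xpredT).
apply: eq_bigr => q _.
rewrite big_allpairs_dep /= big_cons big_cons big_nil addr0.
have Z : forall d, D q != d -> \sum_(om <- words)
   delta qj (nth (lend Sigma) (tape w) p) (last None st) q d om *
   ((w, move w d p, q, take (size st).-1 st ++ om) == c')%:R = 0.
  by move=> d nd; rewrite big1 // => om _; rewrite Hsimp // mul0r.
rewrite /amp /tgt /reduced /sym.
by case E: (D q); [rewrite Z ?E // add0r | rewrite (Z true) ?E // addr0].
Qed.

Lemma shape q1 a b q om : phi q1 a b q om != 0 ->
  [/\ (size om <= 2)%N, size om = 2%N -> nth None om 0 = b,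
      b = None -> exists s : seq T, om = None :: map Some s
    & b <> None -> exists s : seq T, om = map Some s].
Proof. by move=> nz; case: Hqpa => _ H; exact: (H q1 a b q (D q) om nz). Qed.

Lemma phi_big q1 a b q om : (2 < size om)%N -> phi q1 a b q om = 0.
Proof.
move=> lt; have [//|nz] := eqVneq (phi q1 a b q om) 0.
by case: (shape nz) => H _ _ _; rewrite ltnNge H in lt.
Qed.

Lemma phi_head q1 a b q x y : x != b -> phi q1 a b q [:: x; y] = 0.
Proof.
move=> nx; apply/eqP; apply: contraNT nx => /shape [_ H _ _].
by rewrite -(H erefl).
Qed.

Lemma phi_noneR q1 a b q x : phi q1 a b q [:: x; None] = 0.
Proof.
apply/eqP; apply: contraT => /shape [_ _ H1 H2].
case: b H1 H2 => [t|] H1 H2.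
  by have [[|s0 [|s1 s]] //] := H2 ltac:(by []).
by have [[|s0 s] //] := H1 erefl.
Qed.

Lemma phi_NoneS q1 a q om : (None \notin om) -> phi q1 a None q om = 0.
Proof.
move=> nN; apply/eqP; apply: contraT => /shape [_ _ H1 _].
by have [s E] := H1 erefl; rewrite E inE eqxx in nN.
Qed.

Lemma phi_SomeN q1 a t q om : (None \in om) -> phi q1 a (Some t) q om = 0.
Proof.
move=> iN; apply/eqP; apply: contraT => /shape [_ _ _ H2].
have [s E] := H2 ltac:(by []); rewrite E in iN.
by move: iN => /mapP [x _].
Qed.

Lemma mem_words om : (om \in words) = (size om <= 2)%N.
Proof.
rewrite /words_le2 !mem_cat.
case: om => [|a [|b [|c om]]] /=; rewrite ?inE ?eqxx //.
- by rewrite (@map_f _ _ (fun a => [:: a])) ?mem_enum ?orbT.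
- rewrite orbC; apply/orP; left.
  by apply/allpairsP; exists (a, b); rewrite !mem_enum.
- apply/negbTE; rewrite negb_or; apply/andP; split.
    by apply/mapP => -[x _].
  by apply/allpairsP => -[[x y] [_ _]].
Qed.

Lemma uniq_words : uniq words.
Proof.
rewrite /words_le2 !cat_uniq /=.
rewrite map_inj_uniq ?enum_uniq; last by move=> x y [].
rewrite allpairs_uniq ?enum_uniq //; last by move=> [x y] [x' y'] _ _ [-> ->].
apply/and4P; split => //; apply/hasPn => s.
  by rewrite mem_cat => /orP [/mapP [x _ ->]|/allpairsP [[x y] [_ _ ->]]].
by move=> /allpairsP [[x y] [_ _ ->]] /=; apply/mapP => -[z _].
Qed.

Lemma sum_words (F : seq (Delta T) -> C) :
  \sum_(om <- words) F om = F [::] + \sum_(a : Delta T) F [:: a]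
     + \sum_(a : Delta T) \sum_(b : Delta T) F [:: a; b].
Proof.
rewrite /words_le2 !big_cat big_seq1 big_map big_allpairs_dep /= !sum_enum addrA.
by congr (_ + _); apply: eq_bigr => a _; rewrite sum_enum.
Qed.

Lemma sum_pick (F : seq (Delta T) -> C) y :
  ((2 < size y)%N -> F y = 0) ->
  \sum_(om <- words) F om * (om == y)%:R = F y.
Proof.
move=> Fz; rewrite (@sum_pred1 C) ?uniq_words // mem_words.
by case: leqP => [_|/Fz ->]; rewrite ?mul1r ?mul0r.
Qed.


Lemma move_lt (w : seq Sigma) d p : (p < size w + 2)%N -> (move w d p < size w + 2)%N.
Proof. by case: d => //= _; rewrite ltn_pmod // addn2. Qed.

Lemma move_eq (w : seq Sigma) d p p' : (p < size w + 2)%N -> (p' < size w + 2)%N ->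
  (move w d p == move w d p') = (p == p').
Proof.
case: d => //= lp lp'.
by rewrite -[p.+1]addn1 -[p'.+1]addn1 eqn_modDr !modn_small.
Qed.

Definition unmove (w : seq Sigma) (d : bool) p :=
  if d then ((p + (size w).+1) %% (size w + 2))%N else p.

Lemma unmove_lt (w : seq Sigma) d p : (p < size w + 2)%N -> (unmove w d p < size w + 2)%N.
Proof. by case: d => //= _; rewrite ltn_pmod // addn2. Qed.

Lemma move_unmove (w : seq Sigma) d p : (p < size w + 2)%N -> move w d (unmove w d p) = p.
Proof.
case: d => //= lp.
rewrite -addn1 modnDml -addnA addn1 -[(size w).+2]addn2 modnDr modn_small //.
Qed.

Lemma unmove_move (w : seq Sigma) d p : (p < size w + 2)%N -> unmove w d (move w d p) = p.
Proof.
move=> lp; apply/eqP; rewrite -(@move_eq w d) ?move_unmove ?unmove_lt ?move_lt //.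
Qed.

Lemma tgt_eq w p q0 st w' p' q0' st' q om q' om' :
  (p < size w + 2)%N -> (p' < size w' + 2)%N ->
  (tgt (w', p', q0', st') q' om' == tgt (w, p, q0, st) q om) =
  [&& q' == q, w' == w, p' == p &
      take (size st').-1 st' ++ om' == take (size st).-1 st ++ om].
Proof.
move=> lp lp'; rewrite /tgt !xpair_eqE.
case: (eqVneq q' q) => [->|nq]; rewrite ?eqxx ?andbT ?andbF //=.
case: (eqVneq w' w) => [ew|nw] //=.
by rewrite ew in lp' *; rewrite move_eq.
Qed.

Lemma U_at_tgt w p q0 st w' p' q0' st' q om :
  (p < size w + 2)%N -> (p' < size w' + 2)%N ->
  U (tgt (w, p, q0, st) q om) (w', p', q0', st') =
  ((w' == w) && (p' == p))%:R *
   \sum_(om' <- words) amp (w', p', q0', st') q om' *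
      (take (size st').-1 st' ++ om' == take (size st).-1 st ++ om)%:R.
Proof.
move=> lp lp'; rewrite U_tgt.
rewrite (eq_bigr (fun q' => (((w' == w) && (p' == p))%:R *
   \sum_(om' <- words) amp (w', p', q0', st') q' om' *
      (take (size st').-1 st' ++ om' == take (size st).-1 st ++ om)%:R) * (q' == q)%:R)).
  by rewrite (@sum_pred1 C) ?enum_uniq // mem_enum mul1r.
move=> q' _; case: (eqVneq q' q) => [->|nq].
  rewrite mulr1; case: (boolP ((w' == w) && (p' == p))) => H.
    rewrite mul1r; apply: eq_bigr => om' _; rewrite tgt_eq // eqxx.
    by case/andP: H => -> ->.
  rewrite mul0r big1 // => om' _; rewrite tgt_eq // eqxx /=.
  by move: H; case: (w' == w); case: (p' == p) => //= _; rewrite mulr0.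
rewrite mulr0 big1 // => om' _; rewrite tgt_eq // (negbTE nq) /=.
by rewrite mulr0.
Qed.

Lemma amp_big c q om : (2 < size om)%N -> amp c q om = 0.
Proof. by case: c => [[[w p] qj] st] /= H; rewrite phi_big. Qed.

Lemma U_prefix w p q1 s1 q2 s2 x q om :
  (p < size w + 2)%N ->
  take (size s1).-1 s1 = take (size s2).-1 s2 ++ x ->
  U (tgt (w, p, q1, s1) q om) (w, p, q2, s2) = amp (w, p, q2, s2) q (x ++ om).
Proof.
move=> lp E; rewrite U_at_tgt // !eqxx mul1r E -catA.
under eq_bigr => om' _ do rewrite eqseq_cat // eqxx /=.
by rewrite sum_pick // => H; apply: phi_big.
Qed.

Lemma U_self w p q1 s1 q om : (p < size w + 2)%N ->
  U (tgt (w, p, q1, s1) q om) (w, p, q1, s1) = amp (w, p, q1, s1) q om.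
Proof. by move=> lp; rewrite (@U_prefix _ _ _ _ _ _ [::]) ?cats0. Qed.

Definition stk_ok (st : seq (Delta T)) := exists s : seq T, st = None :: map Some s.

Lemma tgt_stack_ok st q1 a q om : stk_ok st ->
  phi q1 a (last None st) q om != 0 -> stk_ok (take (size st).-1 st ++ om).
Proof.
case=> s ->; case/lastP: s => [|s t] /=.
  by move=> /shape [_ _ H _]; have [y ->] := H erefl; exists y.
rewrite map_rcons -rcons_cons last_rcons size_rcons /= -cats1.
rewrite take_size_cat ?size_map //.
move=> /shape [_ _ _ H]; have [y ->] := H ltac:(by []).
by exists (s ++ y); rewrite map_cat.
Qed.

Lemma pred_stack_ok a0 t om q1 a q : stk_ok (a0 ++ om) ->
  phi q1 a t q om != 0 -> stk_ok (a0 ++ [:: t]).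
Proof.
case=> s E /shape [_ _ H1 H2]; case: t H1 H2 => [t|] H1 H2.
  have [y Ey] := H2 ltac:(by []); rewrite Ey in E.
  case: a0 E => [|b a0] /=.
    by case: y Ey => [|y0 y] //= Ey [].
  case=> -> E; exists (take (size a0) s ++ [:: t]).
  rewrite map_cat map_take -E take_size_cat //.
have [y Ey] := H1 erefl; rewrite Ey in E.
case: a0 E => [|b a0] /=; first by move=> _; exists [::].
case=> _ E; have : None \in [seq Some i | i <- s].
  by rewrite -E mem_cat inE eqxx orbT.
by case/mapP.
Qed.

Lemma U_nz c' c : U c' c != 0 ->
  exists q om, [/\ om \in words, amp c q om != 0 & tgt c q om = c'].
Proof.
rewrite U_tgt => /sum_nz [q [_ /sum_nz [om [omw nz]]]].
exists q, om; move: nz; case: (eqVneq (tgt c q om) c') => [E|_] nz.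
  by split => //; apply: contraNneq nz => ->; rewrite mul0r.
by rewrite mulr0 eqxx in nz.
Qed.

Lemma valid_tgt c q om : valid c -> amp c q om != 0 -> valid (tgt c q om).
Proof.
case: c => [[[w p] qj] st] [lp sok] nz; split; first exact: move_lt.
exact: (tgt_stack_ok sok nz).
Qed.

Lemma valid_U c' c : valid c -> U c' c != 0 -> valid c'.
Proof. by move=> vc /U_nz [q [om [_ nz <-]]]; apply: valid_tgt. Qed.

Definition Tl (c : config) := [seq tgt c q om | q <- enum Q, om <- words].

Lemma Tl_supp c1 (f : config -> C) : valid c1 ->
  (forall c, f c != 0 -> U c c1 != 0) -> supp_list f (Tl c1).
Proof.
move=> v1 Hf; split.
- apply: allpairs_uniq; rewrite ?enum_uniq ?uniq_words //.
  move=> [q om] [q' om'] _ _ /= E.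
  move: v1 E; case: c1 Hf => [[[w p] qj] st] _ [lp _] /eqP.
  rewrite tgt_eq // => /and4P [/eqP -> _ _].
  by rewrite eqseq_cat // eqxx /= => /eqP ->.
- by move=> c _ /Hf; apply: valid_U.
- move=> c vc /Hf /U_nz [q [om [omw _ <-]]].
  by apply: allpairs_f; rewrite ?mem_enum.
Qed.

Definition G c1 c2 := \sum_(c <- Tl c1) (U c c1)^* * U c c2.

Lemma fin_sum_col c1 c2 s : valid c1 ->
  fin_sum (fun c => (U c c1)^* * U c c2) s <-> s = G c1 c2.
Proof.
move=> v1; apply: fin_sum_supp; apply: Tl_supp => // c.
by apply: contraNneq => ->; rewrite conjC0 mul0r.
Qed.

Lemma G_sym c1 c2 : valid c1 -> valid c2 -> G c1 c2 = (G c2 c1)^*.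
Proof.
move=> v1 v2; rewrite /G (@supp_swap _ _ _ _ _ (Tl c1) (Tl c2)).
- rewrite rmorph_sum; apply: eq_bigr => c _.
  by rewrite rmorphM /= conjCK mulrC.
- by apply: Tl_supp => // c; apply: contraNneq => ->; rewrite conjC0 mul0r.
- by apply: Tl_supp => // c; apply: contraNneq => ->; rewrite mulr0.
Qed.

Lemma G_expand w p q1 s1 c2 : (p < size w + 2)%N ->
  G (w, p, q1, s1) c2 = \sum_(q <- enum Q) \sum_(om <- words)
     (amp (w, p, q1, s1) q om)^* * U (tgt (w, p, q1, s1) q om) c2.
Proof.
move=> lp; rewrite /G /Tl big_allpairs_dep; apply: eq_bigr => q _.
by apply: eq_bigr => om _; rewrite U_self.
Qed.

Lemma G_prefix w p q1 s1 q2 s2 x : (p < size w + 2)%N ->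
  take (size s1).-1 s1 = take (size s2).-1 s2 ++ x ->
  G (w, p, q1, s1) (w, p, q2, s2) = \sum_(q <- enum Q) \sum_(om <- words)
     (phi q1 (sym w p) (last None s1) q om)^* *
        phi q2 (sym w p) (last None s2) q (x ++ om).
Proof.
move=> lp E; rewrite G_expand //; apply: eq_bigr => q _.
by apply: eq_bigr => om _; rewrite (U_prefix _ _ _ _ lp E).
Qed.

Lemma G_diff w1 p1 q1 s1 w2 p2 q2 s2 : (p1 < size w1 + 2)%N ->
  (p2 < size w2 + 2)%N -> ~~ ((w2 == w1) && (p2 == p1)) ->
  G (w1, p1, q1, s1) (w2, p2, q2, s2) = 0.
Proof.
move=> l1 l2 H; rewrite G_expand // big1 // => q _; rewrite big1 // => om _.
by rewrite U_at_tgt // (negbTE H) mul0r mulr0.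
Qed.

Lemma G_noprefix w p q1 s1 q2 s2 : (p < size w + 2)%N ->
  (size (take (size s2).-1 s2) <= size (take (size s1).-1 s1))%N ->
  take (size (take (size s2).-1 s2)) (take (size s1).-1 s1) != take (size s2).-1 s2 ->
  G (w, p, q1, s1) (w, p, q2, s2) = 0.
Proof.
move=> lp le ne; rewrite G_expand // big1 // => q _; rewrite big1 // => om _.
rewrite U_at_tgt // big1 ?mulr0 // => om' _.
case: eqP; last by rewrite mulr0.
move=> E; move: ne; rewrite -(takel_cat om le) -E take_size_cat //.
by rewrite eqxx.
Qed.


Lemma form0 q1 q2 s t1 t2 :
  \sum_(q <- enum Q) \sum_(om <- words) (phi q1 s t1 q om)^* * phi q2 s t2 q ([::] ++ om)
  = \sum_(q : Q) \sum_(om <- words) (phi q1 s t1 q om)^* * phi q2 s t2 q om.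
Proof. by rewrite sum_enum. Qed.

Lemma form1 q1 s t1 :
  \sum_(q <- enum Q) \sum_(om <- words) (phi q1 s t1 q om)^* * phi q1 s t1 q ([::] ++ om)
  = \sum_(q : Q) \sum_(om <- words) `|phi q1 s t1 q om| ^+ 2.
Proof.
rewrite sum_enum; apply: eq_bigr => q _; apply: eq_bigr => om _.
by rewrite normCKC.
Qed.

Lemma form4a q1 q2 s t1 t2 t3 :
  \sum_(q <- enum Q) \sum_(om <- words) (phi q1 s t1 q om)^* * phi q2 s t2 q ([:: t3] ++ om)
  = \sum_(q : Q) \sum_(t : Delta T) (phi q1 s t1 q [:: t])^* * phi q2 s t2 q [:: t3; t]
   + \sum_(q : Q) (phi q1 s t1 q [::])^* * phi q2 s t2 q [:: t3].
Proof.
rewrite sum_enum -big_split; apply: eq_bigr => q _; rewrite sum_words /=.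
have Z : \sum_a \sum_b (phi q1 s t1 q [:: a; b])^* * phi q2 s t2 q [:: t3; a; b] = 0.
  by apply: big1 => a _; apply: big1 => b _; rewrite (@phi_big q2 s t2 q) ?mulr0.
by rewrite Z addr0 addrC.
Qed.

Lemma form4b q1 q2 s t1 t2 t3 t4 :
  \sum_(q <- enum Q) \sum_(om <- words) (phi q1 s t1 q om)^* * phi q2 s t2 q ([:: t3; t4] ++ om)
  = \sum_(q : Q) (phi q1 s t1 q [::])^* * phi q2 s t2 q [:: t3; t4].
Proof.
rewrite sum_enum; apply: eq_bigr => q _; rewrite sum_words /=.
have Z : \sum_a \sum_b (phi q1 s t1 q [:: a; b])^* * phi q2 s t2 q [:: t3, t4, a & [:: b]] = 0.
  by apply: big1 => a _; apply: big1 => b _; rewrite (@phi_big q2 s t2 q) ?mulr0.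
have Z2 : \sum_a (phi q1 s t1 q [:: a])^* * phi q2 s t2 q [:: t3, t4 & [:: a]] = 0.
  by apply: big1 => a _; rewrite (@phi_big q2 s t2 q) ?mulr0.
by rewrite Z Z2 !addr0.
Qed.

Lemma form_big q1 q2 s t1 t2 x : (2 < size x)%N ->
  \sum_(q <- enum Q) \sum_(om <- words) (phi q1 s t1 q om)^* * phi q2 s t2 q (x ++ om) = 0.
Proof.
move=> lx; rewrite big1 // => q _; rewrite big1 // => om _.
by rewrite (@phi_big q2 s t2 q) ?mulr0 // size_cat (leq_trans lx) ?leq_addr.
Qed.

Lemma stk_split st : stk_ok st -> st = take (size st).-1 st ++ [:: last None st].
Proof.
case=> s ->; case/lastP: s => [|s t] //=.
by rewrite map_rcons -rcons_cons last_rcons size_rcons /= -cats1 take_size_cat ?size_map.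
Qed.

Definition cond1 := forall q1 s1 t1,
  \sum_(q : Q) \sum_(om <- words) `|phi q1 s1 t1 q om| ^+ 2 = 1.
Definition cond2 := forall q1 q2 s1 t1 t2, (q1, t1) != (q2, t2) ->
  \sum_(q : Q) \sum_(om <- words) (phi q1 s1 t1 q om)^* * phi q2 s1 t2 q om = 0.
Definition cond3 := forall q1 s1 t1 t2,
  \sum_(q : Q) \sum_(t : Delta T) \sum_(om <- [:: [::]; [:: t2]; [:: t1; t2]])
     `|phi q s1 t q1 om| ^+ 2 = 1.
Definition cond4 := forall q1 q2 s1 t1 t2 t3,
  \sum_(q : Q) \sum_(t : Delta T)
      (phi q1 s1 t1 q [:: t])^* * phi q2 s1 t2 q [:: t3; t]
    + \sum_(q : Q) (phi q1 s1 t1 q [::])^* * phi q2 s1 t2 q [:: t3] = 0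
  /\ \sum_(q : Q) (phi q1 s1 t1 q [::])^* * phi q2 s1 t2 q [:: t2; t3] = 0.

Lemma col_main : cond1 -> cond2 -> cond4 -> forall c1 c2, valid c1 -> valid c2 ->
  (size (take (size c2.2).-1 c2.2) <= size (take (size c1.2).-1 c1.2))%N ->
  G c1 c2 = (c1 == c2)%:R.
Proof.
move=> h1 h2 h4 [[[w1 p1] q1] s1] [[[w2 p2] q2] s2] [lp1 ok1] [lp2 ok2] /= le.
case: (boolP ((w2 == w1) && (p2 == p1))) => H; last first.
  rewrite G_diff //; apply/esym; apply/eqP; rewrite pnatr_eq0 eqb0.
  by apply: contra H => /eqP [-> -> _ _]; rewrite !eqxx.
case/andP: H => /eqP ew /eqP ep; subst w2 p2.
set a1 := take (size s1).-1 s1 in le *; set a2 := take (size s2).-1 s2 in le *.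
case: (eqVneq (take (size a2) a1) a2) => Hp; last first.
  rewrite G_noprefix //; apply/esym; apply/eqP; rewrite pnatr_eq0 eqb0.
  apply: contra Hp => /eqP [_ es]; rewrite /a1 /a2 es take_size //.
have Ea : a1 = a2 ++ drop (size a2) a1 by rewrite -{1}(cat_take_drop (size a2) a1) Hp.
set x := drop (size a2) a1 in Ea.
have ne : x != [::] -> ((w1, p1, q1, s1) == (w1, p1, q2, s2)) = false.
  move=> nx; apply/negbTE; apply: contra nx => /eqP [_ es].
  by move: Ea; rewrite /a1 /a2 es -{1}[take _ s2]cats0 => /eqP; rewrite eqseq_cat // eqxx /= eq_sym.
rewrite (G_prefix q1 q2 lp1 Ea).
case: x Ea ne => [|t3 [|t4 [|t5 x]]] Ea ne.
- rewrite form0.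
  case: (eqVneq (q1, last None s1) (q2, last None s2)) => E.
    case: E => eq et; subst q2; rewrite -et -form0 form1 h1.
    have -> : s1 = s2 by rewrite (stk_split ok1) (stk_split ok2) et -/a1 -/a2 Ea cats0.
    by rewrite eqxx.
  rewrite h2 //; apply/esym; apply/eqP; rewrite pnatr_eq0 eqb0.
  by apply: contra E => /eqP [-> ->].
- by rewrite form4a (h4 _ _ _ _ _ _).1 ne.
- rewrite form4b ne //.
  case: (eqVneq t3 (last None s2)) => et.
    by rewrite et (h4 _ _ _ _ _ t4).2.
  by rewrite big1 // => q _; rewrite phi_head ?mulr0.
- by rewrite form_big ?ne.
Qed.

Lemma col_ortho : cond1 -> cond2 -> cond4 -> forall c1 c2, valid c1 -> valid c2 ->
  G c1 c2 = (c1 == c2)%:R.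
Proof.
move=> h1 h2 h4 c1 c2 v1 v2.
case: (leqP (size (take (size c2.2).-1 c2.2)) (size (take (size c1.2).-1 c1.2))) => le.
  exact: col_main.
rewrite G_sym // col_main // ?(ltnW le) // rmorph_nat eq_sym //.
Qed.


Definition prd (w : seq Sigma) pp (st : seq (Delta T)) q t k : config :=
  (w, pp, q, take (size st - k) st ++ [:: t]).

Lemma U_prd w p1 q1 st q t k : (p1 < size w + 2)%N -> (k <= size st)%N ->
  U (w, p1, q1, st) (prd w (unmove w (D q1) p1) st q t k) =
  phi q (sym w (unmove w (D q1) p1)) t q1 (drop (size st - k) st).
Proof.
move=> lp lk; rewrite U_tgt.
set pp := unmove w (D q1) p1; set m := (size st - k)%N.
have sz : (size (take m st ++ [:: t])).-1 = m.
  by rewrite size_cat size_takel ?leq_subr // addn1.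
have Est : st = take m st ++ drop m st by rewrite cat_take_drop.
transitivity (\sum_(q' <- enum Q) (\sum_(om' <- words)
    amp (prd w pp st q t k) q1 om' * (om' == drop m st)%:R) * (q' == q1)%:R).
  apply: eq_bigr => q' _; case: (eqVneq q' q1) => [->|nq].
    rewrite mulr1; apply: eq_bigr => om' _; congr (_ * _%:R).
    rewrite /tgt /prd sz take_size_cat ?size_takel ?leq_subr //.
    rewrite !xpair_eqE !eqxx /= move_unmove // eqxx /=.
    by rewrite [X in _ == X]Est eqseq_cat // eqxx.
  rewrite mulr0 big1 // => om' _.
  by rewrite /tgt /prd !xpair_eqE (negbTE nq) /= andbF mulr0.
rewrite (@sum_pred1 C) ?enum_uniq // mem_enum mul1r.
rewrite sum_pick; last by move=> H; rewrite /amp /prd phi_big.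
by rewrite /amp /prd last_cat.
Qed.

Lemma drop1 (X : eqType) (st : seq X) x0 : st != [::] ->
  drop (size st - 1) st = [:: last x0 st].
Proof.
case/lastP: st => // l a _; rewrite last_rcons size_rcons subn1 /= -cats1.
by rewrite drop_size_cat.
Qed.

Lemma drop2 (X : Type) (st : seq X) x0 : (2 <= size st)%N ->
  drop (size st - 2) st = [:: last x0 (take (size st).-1 st); last x0 st].
Proof.
case/lastP: st => [|l b] //; case/lastP: l => [|l a] //= _.
rewrite last_rcons !size_rcons -addn2 addnK -!cats1 -catA drop_size_cat //.
rewrite addn2 /= take_cat ltnNge leqnSn /= subSn // subnn /=.
by rewrite last_cat.
Qed.

Definition R3 q1 s t1 t2 := \sum_(q : Q) \sum_(t : Delta T)
  \sum_(om <- [:: [::]; [:: t2]; [:: t1; t2]]) `|phi q s t q1 om| ^+ 2.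

Lemma R3_none q1 s t1 t1' : R3 q1 s t1 None = R3 q1 s t1' None.
Proof.
apply: eq_bigr => q _; apply: eq_bigr => t _.
by rewrite !big_cons !big_nil !phi_noneR.
Qed.

Definition ks (st : seq (Delta T)) := if (2 <= size st)%N then [:: 0; 1; 2]%N else [:: 0; 1]%N.

Definition Pl w p1 q1 (st : seq (Delta T)) :=
  [seq prd w (unmove w (D q1) p1) st q tk.1 tk.2 | q <- enum Q,
     tk <- [seq (t, k) | t <- enum (Delta T), k <- ks st]].

Lemma ks_le st k : stk_ok st -> k \in ks st -> (k <= size st)%N.
Proof.
case=> s -> /=; rewrite /ks /=; case: ifP => H; rewrite !inE.
  by case/or3P => /eqP ->; rewrite // ltnW.
by case/orP => /eqP ->.
Qed.

Lemma row_sum w p1 q1 st s : (p1 < size w + 2)%N -> stk_ok st ->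
  fin_sum (fun c => U (w, p1, q1, st) c * (U (w, p1, q1, st) c)^*) s <->
  s = R3 q1 (sym w (unmove w (D q1) p1)) (last None (take (size st).-1 st))
         (last None st).
Proof.
move=> lp ok; set c1 := (w, p1, q1, st).
set pp := unmove w (D q1) p1.
have lpp : (pp < size w + 2)%N by apply: unmove_lt.
have sl : supp_list (fun c => U c1 c * (U c1 c)^*) (Pl w p1 q1 st).
  split.
  - apply: allpairs_uniq; rewrite ?enum_uniq //.
      apply: allpairs_uniq; rewrite ?enum_uniq //; first by rewrite /ks; case: ifP.
      by move=> [x y] [x' y'] _ _ [-> ->].
    move=> [q [t k]] [q' [t' k']]; rewrite !mem_pairs => /and3P [_ _ kb] /and3P [_ _ kb'].
    rewrite /prd /= => -[-> E]; have := congr1 size E.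
    rewrite !size_cat !size_takel ?leq_subr // => /addIn Ek.
    have Ebb : k = k' by rewrite -(subKn (ks_le ok kb)) -(subKn (ks_le ok kb')) Ek.
    subst k'; move: E => /eqP; rewrite eqseq_cat //= => /andP [_ /eqP [->]].
    by [].
  - move=> c /allpairsP [[q tk] [_ /allpairsP [[t k] [_ kk ->]] ->]] /= nz.
    have nz1 : U c1 (prd w pp st q t k) != 0.
      by apply: contraNneq nz => ->; rewrite mul0r.
    rewrite /c1 U_prd ?(ks_le ok kk) // in nz1.
    split => //=; apply: (pred_stack_ok _ nz1).
    by rewrite cat_take_drop.
  - move=> c vc nz.
    have nz1 : U c1 c != 0 by apply: contraNneq nz => ->; rewrite mul0r.
    have [q' [om' [omw _ E]]] := U_nz nz1.
    case: c vc E {nz nz1} => [[[w0 p0] q0] s0] [lp0 ok0].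
    rewrite /tgt /c1 => -[ew em eq es]; subst w0 q'.
    have ep : p0 = pp by rewrite /pp -em unmove_move.
    subst p0.
    have kle : (size om' <= 2)%N by rewrite -mem_words.
    have Em : (size st - size om')%N = size (take (size s0).-1 s0).
      by rewrite -es size_cat addnK.
    have Ek : size om' \in ks st.
      rewrite /ks; case: ifP => H; rewrite !inE.
        by move: kle; case: (size om') => [|[|[|]]].
      have : (size om' <= size st)%N by rewrite -es size_cat leq_addl.
      by move: H kle; case: (size st) => [|[|]] //; case: (size om') => [|[|]].
    apply/allpairsP; exists (q0, (last None s0, size om')); split => //.
      by rewrite mem_enum.
      by apply/allpairsP; exists (last None s0, size om'); rewrite mem_enum.
    rewrite /prd /= Em -es take_size_cat //.
    by rewrite -stk_split.
apply: (iff_trans (fin_sum_supp _ sl)).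
suff -> : \sum_(c <- Pl w p1 q1 st) U c1 c * (U c1 c)^* =
  R3 q1 (sym w pp) (last None (take (size st).-1 st)) (last None st) by [].
rewrite /Pl big_allpairs_dep sum_enum; apply: eq_bigr => q _.
rewrite big_allpairs_dep sum_enum; apply: eq_bigr => t _ /=.
have HU : forall k, k \in ks st ->
  U c1 (prd w pp st q t k) * (U c1 (prd w pp st q t k))^* =
  `|phi q (sym w pp) t q1 (drop (size st - k) st)| ^+ 2.
  by move=> k kk; rewrite /c1 U_prd ?(ks_le ok kk) // normCK.
transitivity (\sum_(k <- ks st) `|phi q (sym w pp) t q1 (drop (size st - k) st)| ^+ 2).
  by rewrite big_seq [RHS]big_seq; apply: eq_bigr => k kk; apply: HU.
have stn : st != [::] by case: ok => x ->.
rewrite /ks; case: ifP => H2; rewrite !big_cons !big_nil subn0 drop_size (drop1 None stn).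
  by rewrite (drop2 None H2).
have -> : last None st = None.
  by case: ok H2 => x ->; case: x.
by rewrite phi_noneR normr0 expr0n !addr0.
Qed.


Lemma sym_real (a : Gam Sigma) : exists w p, (p < size w + 2)%N /\ sym w p = a.
Proof.
case: a => [a|[|]].
- by exists [:: a], 1%N.
- by exists [::], 1%N.
- by exists [::], 0%N.
Qed.

Lemma ok1 : stk_ok [:: None]. Proof. by exists [::]. Qed.
Lemma ok2 a : stk_ok [:: None; Some a]. Proof. by exists [:: a]. Qed.
Lemma ok3 a b : stk_ok [:: None; Some a; Some b]. Proof. by exists [:: a; b]. Qed.
Lemma ok4 a b c : stk_ok [:: None; Some a; Some b; Some c].
Proof. by exists [:: a; b; c]. Qed.

Lemma neq_last w p q1 s1 q2 s2 : (q1, last None s1) != (q2, last None s2) ->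
  ((w, p, q1, s1) == (w, p, q2, s2) :> config) = false.
Proof. by move=> H; apply/negbTE; apply: contra H => /eqP [-> ->]. Qed.

Lemma neq_size w p q1 s1 q2 s2 : size s1 != size s2 ->
  ((w, p, q1, s1) == (w, p, q2, s2) :> config) = false.
Proof. by move=> H; apply/negbTE; apply: contra H => /eqP [_ ->]. Qed.

Lemma conj_mul0 (x y : C) : x = 0 \/ y = 0 -> x^* * y = 0.
Proof. by case=> ->; rewrite ?conjC0 ?mul0r ?mulr0. Qed.

Theorem main_thm : unitary_U delta <-> [/\ cond1, cond2, cond3 & cond4].
Proof.
split.
  case=> Hc Hr.
  have col : forall c1 c2, valid c1 -> valid c2 -> G c1 c2 = (c1 == c2)%:R.
    by move=> c1 c2 v1 v2; apply/esym; apply/(fin_sum_col _ _ v1); apply: Hc.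
  have fwd : forall w p q1 q2 s1 s2 x, (p < size w + 2)%N -> stk_ok s1 -> stk_ok s2 ->
      take (size s1).-1 s1 = take (size s2).-1 s2 ++ x ->
      \sum_(q <- enum Q) \sum_(om <- words)
        (phi q1 (sym w p) (last None s1) q om)^* *
           phi q2 (sym w p) (last None s2) q (x ++ om)
      = ((w, p, q1, s1) == (w, p, q2, s2) :> config)%:R.
    move=> w p q1 q2 s1 s2 x lp o1 o2 E.
    by rewrite -(G_prefix q1 q2 lp E) col.
  split.
  - move=> q1 s1 t1; have [w [p [lp <-]]] := sym_real s1.
    case: t1 => [a|].
      have := fwd w p q1 q1 _ _ [::] lp (ok2 a) (ok2 a) erefl.
      by rewrite form1 eqxx.
    have := fwd w p q1 q1 _ _ [::] lp ok1 ok1 erefl.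
    by rewrite form1 eqxx.
  - move=> q1 q2 s1 t1 t2 ne; have [w [p [lp <-]]] := sym_real s1.
    case: t1 ne => [a|] ne; case: t2 ne => [b|] ne.
    + have := fwd w p q1 q2 _ _ [::] lp (ok2 a) (ok2 b) erefl.
      by rewrite form0 neq_last.
    + apply: big1 => q _; apply: big1 => om _; apply: conj_mul0.
      case: (boolP (None \in om)) => H; [left; exact: phi_SomeN | right; exact: phi_NoneS].
    + apply: big1 => q _; apply: big1 => om _; apply: conj_mul0.
      case: (boolP (None \in om)) => H; [right; exact: phi_SomeN | left; exact: phi_NoneS].
    + have := fwd w p q1 q2 _ _ [::] lp ok1 ok1 erefl.
      by rewrite form0 neq_last.
  - move=> q1 s1 t1 t2; have [w [p0 [lp <-]]] := sym_real s1.
    set p1 := move w (D q1) p0.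
    have lp1 : (p1 < size w + 2)%N by apply: move_lt.
    have E : sym w p0 = sym w (unmove w (D q1) p1) by rewrite /p1 unmove_move.
    case: t2 => [b|].
      case: t1 => [a|].
        have V : valid (w, p1, q1, [:: None; Some a; Some b]) by split; [exact: lp1 | exact: (ok3 a b)].
        have := Hr _ _ V V; rewrite eqxx.
        move/(row_sum _ _ lp1 (ok3 a b)) => HH; rewrite E; symmetry; exact: HH.
      have V : valid (w, p1, q1, [:: None; Some b]) by split; [exact: lp1 | exact: (ok2 b)].
        have := Hr _ _ V V; rewrite eqxx.
      move/(row_sum _ _ lp1 (ok2 b)) => HH; rewrite E; symmetry; exact: HH.
    have V : valid (w, p1, q1, [:: None]) by split; [exact: lp1 | exact: ok1].
        have := Hr _ _ V V; rewrite eqxx.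
    move/(row_sum _ _ lp1 ok1) => HH; change (R3 q1 (sym w p0) t1 None = 1); rewrite E (R3_none _ _ _ None); symmetry; exact: HH.
  - move=> q1 q2 s1 t1 t2 t3; have [w [p [lp <-]]] := sym_real s1.
    split.
    + case: t1 => [a|]; last first.
        rewrite !big1 ?addr0 // => q _.
          by apply: conj_mul0; left; apply: phi_NoneS.
        apply: big1 => t _; apply: conj_mul0; case: t => [t|].
          by left; apply: phi_NoneS.
        by right; apply: phi_noneR.
      case: t3 => [c|]; case: t2 => [b|].
      * have := fwd w p q1 q2 _ _ [:: Some c] lp (ok3 c a) (ok2 b) erefl.
        by rewrite form4a neq_size.
      * rewrite !big1 ?addr0 // => q _.
          by apply: conj_mul0; right; apply: phi_NoneS.
        by apply: big1 => t _; apply: conj_mul0; right; apply: phi_head.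
      * rewrite !big1 ?addr0 // => q _.
          by apply: conj_mul0; right; apply: phi_SomeN; rewrite inE.
        apply: big1 => t _; apply: conj_mul0; right; apply: phi_SomeN.
        by rewrite inE eqxx.
      * have := fwd w p q1 q2 _ _ [:: None] lp (ok2 a) ok1 erefl.
        by rewrite form4a neq_size.
    + case: t1 => [a|]; last first.
        by apply: big1 => q _; apply: conj_mul0; left; apply: phi_NoneS.
      case: t3 => [c|]; last first.
        by apply: big1 => q _; apply: conj_mul0; right; apply: phi_noneR.
      case: t2 => [b|].
      * have := fwd w p q1 q2 _ _ [:: Some b; Some c] lp (ok4 b c a) (ok2 b) erefl.
        by rewrite form4b neq_size.
      * have := fwd w p q1 q2 _ _ [:: None; Some c] lp (ok3 c a) ok1 erefl.
        by rewrite form4b neq_size.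
case=> h1 h2 h3 h4.
have H1 : forall c1 c2, valid c1 -> valid c2 ->
    fin_sum (fun c => (U c c1)^* * U c c2) (c1 == c2)%:R.
  by move=> c1 c2 v1 v2; apply/(fin_sum_col _ _ v1); rewrite col_ortho.
have H2 : forall c1, valid c1 -> fin_sum (fun c => U c1 c * (U c1 c)^*) 1.
  move=> [[[w p1] q1] st] [lp ok]; apply/(row_sum _ _ lp ok).
  by rewrite /R3 h3.
split => //; exact: rows_ortho.
Qed.

End Concrete.

Unset Implicit Arguments.

Theorem theorem2 (C : numClosedFieldType) (Q Sigma T : finType)
  (q0 : Q) (Qa Qr : {set Q})
  (delta : Q -> Gam Sigma -> Delta T -> Q -> bool -> seq (Delta T) -> C)
  (D : Q -> bool) :
  [disjoint Qa & Qr] ->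
  QPA_transfun delta ->
  simplified delta D ->
  let phi := reduced delta D in
  unitary_U delta <->
  [/\ (* (1) *)
      forall q1 s1 t1,
        \sum_(q : Q) \sum_(om <- words_le2 T) `|phi q1 s1 t1 q om| ^+ 2 = 1,
      (* (2) *)
      forall q1 q2 s1 t1 t2, (q1, t1) != (q2, t2) ->
        \sum_(q : Q) \sum_(om <- words_le2 T)
           (phi q1 s1 t1 q om)^* * phi q2 s1 t2 q om = 0,
      (* (3) *)
      forall q1 s1 t1 t2,
        \sum_(q : Q) \sum_(t : Delta T) \sum_(om <- [:: [::]; [:: t2]; [:: t1; t2]])
           `|phi q s1 t q1 om| ^+ 2 = 1
    & (* (4) *)
      forall q1 q2 s1 t1 t2 t3,
        \sum_(q : Q) \sum_(t : Delta T)
            (phi q1 s1 t1 q [:: t])^* * phi q2 s1 t2 q [:: t3; t]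
          + \sum_(q : Q) (phi q1 s1 t1 q [::])^* * phi q2 s1 t2 q [:: t3] = 0
        /\ \sum_(q : Q) (phi q1 s1 t1 q [::])^* * phi q2 s1 t2 q [:: t2; t3] = 0].
Proof.
move=> _ Hq Hs phi.
exact: (main_thm Hq Hs).
Qed.
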